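(* Let $f(n)=\sum_{k=0}^n(-1)^k\binom nk C_k C_{n-k}$ for integers $n\ge 0$. Then for all $n\ge 2$, $$n(n+2)f(n)=16(n-1)^2f(n-2).$$
   Context: $C_k=\binom{2k}{k}\frac{1}{k+1}$ denotes the $k$-th Catalan number. *)

(* Defs.v *)
From mathcomp Require Import all_boot all_order all_algebra.
Set Implicit Arguments. Unset Strict Implicit. Unset Printing Implicit Defensive.
Import GRing.Theory Num.Theory.

(* k-th Catalan number C_k = binom(2k,k)/(k+1) (exact division in nat). *)
Definition catalan (k : nat) : nat := 'C(k.*2, k) %/ k.+1.

Definition f (n : nat) : int :=
  (\sum_(0 <= k < n.+1) (-1) ^+ k * ('C(n, k) * catalan k * catalan (n - k))%:Z)%R.

(* Main.v *)
Require Import Defs.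
From mathcomp Require Import all_boot all_order all_algebra.
From mathcomp Require Import ring lra zify.
Import GRing.Theory Num.Theory.
Local Open Scope ring_scope.
Local Close Scope ring_scope.

Lemma binLk k : k.+1 * 'C(k.*2, k.+1) = k * 'C(k.*2, k).
Proof. by rewrite mul_bin_left -addnn addnK. Qed.

Lemma catalanE k : catalan k = 'C(k.*2, k) - 'C(k.*2, k.+1).
Proof.
rewrite /catalan.
have E : 'C(k.*2, k) = k.+1 * ('C(k.*2, k) - 'C(k.*2, k.+1)).
  by rewrite mulnBr binLk mulSn addnK.
by rewrite {1}E mulKn.
Qed.

Lemma catalan_mul k : catalan k * k.+1 = 'C(k.*2, k).
Proof. by rewrite catalanE mulnC mulnBr binLk mulSn addnK. Qed.

Lemma catalan_rec k : k.+2 * catalan k.+1 = 2 * (k.*2.+1) * catalan k.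
Proof.
apply/eqP; rewrite -(eqn_pmul2l (ltn0Sn k)); apply/eqP.
have -> : k.+1 * (k.+2 * catalan k.+1) = k.+1 * 'C((k.+1).*2, k.+1) by rewrite -catalan_mul; ring.
have -> : k.+1 * (2 * k.*2.+1 * catalan k) = 2 * k.*2.+1 * 'C(k.*2, k) by rewrite -catalan_mul; ring.
have h1 := mul_bin_diag (k.+1).*2 k.
have h2 := mul_bin_diag (k.*2.+1) k.
have h3 := bin_sub (leq_addl k k.+1 : k.+1 <= k + k.+1).
rewrite addnK addnS addnn in h3.
rewrite -h1 doubleS /= h3.
have -> : k.*2.+2 * 'C(k.*2.+1, k.+1) = 2 * (k.+1 * 'C(k.*2.+1, k.+1)) by rewrite -doubleS -mul2n mulnA.
by rewrite -h2 mulnA.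
Qed.

Definition u n k := 'C(n, k) * catalan k * catalan (n - k).

Lemma catalan_rec' k : (k+2) * catalan (k+1) = 2 * (2 * k+1) * catalan k.
Proof. by rewrite !addn1 addn2 catalan_rec -mul2n. Qed.

Lemma N1 k i : (k+1) * (k+2) * (2 * i+1) * u (k+i+1) (k+1) = (i+1) * (2 * k+1) * (i+2) * u (k+i+1) k.
Proof.
apply/eqP; rewrite -(eqn_pmul2l (ltn0Sn 1)); apply/eqP.
rewrite /u.
have -> : k + i + 1 - (k + 1) = i by lia.
have -> : k + i + 1 - k = i + 1 by lia.
have e1 : (k+1) * 'C(k+i+1, k+1) = (i+1) * 'C(k+i+1, k).
  by rewrite !addn1 mul_bin_left; congr (_ * _); lia.
have e2 := catalan_rec' k.
have e3 := catalan_rec' i.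
transitivity (((k+1) * 'C(k+i+1, k+1)) * ((k+2) * catalan (k+1)) * (2 * (2 * i+1) * catalan i)); first by ring.
rewrite e1 e2 -e3; ring.
Qed.

Lemma N2 k l : 4 * (k+l+2) * (k+l+1) * (2 * l+3) * (2 * l+1) * u (k+l) k = (l+2) * (l+2) * (l+1) * (l+3) * u (k+l+2) k.
Proof.
rewrite /u.
have -> : k + l + 2 - k = l + 2 by lia.
have -> : k + l - k = l by lia.
have b1 := mul_bin_down (k+l+2) k.
have b2 := mul_bin_down (k+l+1) k.
rewrite (_ : (k + l + 2).-1 = k+l+1) in b1; last lia.
rewrite (_ : (k + l + 1).-1 = k+l) in b2; last lia.
rewrite (_ : k + l + 2 - k = l + 2) in b1; last lia.
rewrite (_ : k + l + 1 - k = l + 1) in b2; last lia.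
have e2 := catalan_rec' l.
have e3 := catalan_rec' (l+1).
rewrite (_ : l + 1 + 2 = l + 3) in e3; last lia.
rewrite (_ : l + 1 + 1 = l + 2) in e3; last lia.
have e4 : (l+2) * (l+3) * catalan (l+2) = 4 * (2 * l+3) * (2 * l+1) * catalan l.
  have -> : (l+2) * (l+3) * catalan (l+2) = (l+2) * ((l+3) * catalan (l+2)) by ring.
  rewrite e3.
  have -> : (l + 2) * (2 * (2 * (l + 1) + 1) * catalan (l + 1)) = 2 * (2 * (l + 1) + 1) * ((l+2) * catalan (l + 1)) by ring.
  rewrite e2; ring.
transitivity (((k+l+2) * ((k+l+1) * 'C(k+l, k))) * catalan k * (4 * (2 * l+3) * (2 * l+1) * catalan l)); first by ring.
rewrite b2.
have -> : (k + l + 2) * ((l + 1) * 'C(k + l + 1, k)) = (l+1) * ((k + l + 2) * 'C(k + l + 1, k)) by ring.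
rewrite b1 -e4; ring.
Qed.

Local Open Scope ring_scope.

Definition T n k : rat := (-1) ^+ k * (u n k)%:R.

Lemma R1 k i : T (k+i+1) (k+1) * ((k%:R+1) * (k%:R+2) * (2 * i%:R+1))
  = - ((i%:R+1) * (2 * k%:R+1) * (i%:R+2)) * T (k+i+1) k.
Proof.
rewrite /T exprD expr1.
have H : (((k+1) * (k+2) * (2 * i+1) * u (k+i+1) (k+1))%:R : rat) = ((i+1) * (2 * k+1) * (i+2) * u (k+i+1) k)%:R by rewrite N1.
move: H; set a := u (k + i + 1) (k + 1); set b := u (k + i + 1) k; clearbody a b => H.
rewrite !natrM !natrD in H.
set s := (-1) ^+ k.
transitivity (- s * ((k%:R + 1) * (k%:R + 2) * (i%:R + (i%:R + 0) + 1) * a%:R)); first by ring.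
rewrite H; ring.
Qed.

Lemma R2 k i : T (k+i+1-2)%N k * (4 * (k%:R+i%:R+1) * (k%:R+i%:R) * (2 * i%:R+1) * (2 * i%:R-1))
  = (i%:R+1)^+2 * i%:R * (i%:R+2) * T (k+i+1)%N k.
Proof.
case: i => [|l].
  case: k => [|k]; first by rewrite !addr0 add0r mul0r !mulr0.
  rewrite /T /u bin_small; last by lia.
  by rewrite !mul0n !mulr0 !mul0r.
have -> : (k + l.+1 + 1 - 2 = k + l)%N by lia.
have -> : (k + l.+1 + 1 = k + l + 2)%N by lia.
have H : ((4 * (k+l+2) * (k+l+1) * (2 * l+3) * (2 * l+1) * u (k+l) k)%:R : rat) = ((l+2) * (l+2) * (l+1) * (l+3) * u (k+l+2) k)%:R by rewrite N2.
rewrite /T.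
move: H; set a := u (k + l) k; set b := u (k + l + 2) k; clearbody a b => H.
rewrite !natrM !natrD in H.
set s := (-1) ^+ k.
rewrite -(addn1 l) natrD.
transitivity (s * (4 * (k%:R + l%:R + 2) * (k%:R + l%:R + 1) * (l%:R + (l%:R + 0) + 3) *
    (l%:R + (l%:R + 0) + 1) * a%:R)); first by ring.
rewrite H; ring.
Qed.

Definition P (N K : rat) : rat :=
  (-12*N-13*N^+2+17*N^+3+10*N^+4-8*N^+5) * K
+ (6+6*N-44*N^+2-13*N^+3+38*N^+4-8*N^+5) * K^+2
+ (-2+34*N+3*N^+2-66*N^+3+28*N^+4) * K^+3
+ (-10-2*N+54*N^+2-36*N^+3) * K^+4
+ (2-22*N+20*N^+2) * K^+5
+ (4-4*N) * K^+6.

Definition G (n k : nat) : rat :=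
  P n%:R k%:R / (n%:R * (n%:R+1) * (2*(n%:R-k%:R)-1) * (2*(n%:R-k%:R)-3) * (n%:R-k%:R+1)) * T n k.

Lemma odd_nz (i c : nat) (x : rat) : odd c -> x = 2 * i%:R - c%:R -> x != 0.
Proof.
move=> oc ->; rewrite subr_eq0 -natrM eqr_nat; apply/negP => /eqP E.
by move: oc; rewrite -E oddM.
Qed.

Lemma step k i : (2 <= k+i+1)%N ->
  G (k+i+1) (k+1) - G (k+i+1) k =
  (k+i+1)%:R * ((k+i+1)%:R+2) * T (k+i+1) k - 16 * ((k+i+1)%:R-1)^+2 * T (k+i+1-2)%N k.
Proof.
move=> hn.
have e1 := R1 k i.
have e2 := R2 k i.
rewrite /G.
move: e1 e2.
set T0 := T _ k; set T1 := T _ (k+1)%N; set T2 := T _ k.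
rewrite !natrD.
have k0 : 0 <= k%:R :> rat by apply: ler0n.
have i0 : 0 <= i%:R :> rat by apply: ler0n.
move=> e1 e2.
have -> : T1 = - ((i%:R+1) * (2 * k%:R+1) * (i%:R+2)) * T0 / ((k%:R+1) * (k%:R+2) * (2 * i%:R+1)).
  rewrite -e1; field.
  by rewrite !lt0r_neq0 //; lra.
have hKI : 1 <= k%:R + i%:R :> rat.
  by rewrite -natrD ler1n; lia.
have -> : T2 = (i%:R + 1) ^+ 2 * i%:R * (i%:R + 2) * T0 / (4 * (k%:R + i%:R + 1) * (k%:R + i%:R) * (2 * i%:R + 1) * (2 * i%:R - 1)).
  rewrite -e2; field.
  repeat (apply/andP; split); try (apply: lt0r_neq0; lra).
  by apply: (odd_nz i 1).
have -> : k%:R + i%:R + 1 - (k%:R + 1) = i%:R :> rat by ring.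
have -> : k%:R + i%:R + 1 - k%:R = i%:R + 1 :> rat by ring.
rewrite /P.
field.
repeat (apply/andP; split); try (apply: lt0r_neq0; lra).
  by apply: (odd_nz i 1).
by apply: (odd_nz i 3).
Qed.

Lemma key m : let n := m.+2 in
  (n%:R * (n%:R+2)) * \sum_(0 <= k < n.+1) T n k
  = 16 * (n%:R-1)^+2 * \sum_(0 <= k < m.+1) T m k.
Proof.
move=> n.
have hext : \sum_(0 <= k < n.+1) T m k = \sum_(0 <= k < m.+1) T m k.
  rewrite /n !big_nat_recr //= /T /u (@bin_small m m.+1) // (@bin_small m m.+2) //.
  by rewrite !mul0n !mulr0 !addr0.
rewrite -hext.
apply/eqP; rewrite -subr_eq0; apply/eqP.
rewrite !mulr_sumr -sumrB big_nat_recr //=.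
rewrite (@telescope_sumr_eq _ 0 n (G n)) //; last first.
  move=> k /andP[_ hk].
  have := step k (n - k - 1)%N.
  rewrite (_ : (k + (n - k - 1) + 1 = n)%N); last by lia.
  rewrite (_ : (n - 2 = m)%N); last by lia.
  rewrite addn1 => ->; last by lia.
  done.
have G0 : G n 0 = 0.
  have hP : P n%:R 0%:R = 0 by rewrite /P; ring.
  by rewrite /G hP !mul0r.
rewrite G0 subr0.
have Tz : T m n = 0 by rewrite /T /u bin_small // !mul0n mulr0.
rewrite Tz mulr0 subr0 /G.
have N0 : 0 < n%:R :> rat by rewrite ltr0n.
rewrite /P; field.
rewrite subrr mulr0 !add0r.
have h1 : n%:R + 1 != 0 :> rat.
  by apply: lt0r_neq0; apply: addr_gt0 N0 ltr01.
by rewrite h1 (lt0r_neq0 N0) !oppr_eq0 oner_eq0 pnatr_eq0.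
Qed.

Lemma f_rat n : (f n)%:~R = \sum_(0 <= k < n.+1) T n k :> rat.
Proof.
rewrite /f rmorph_sum; apply: eq_bigr => k _.
by rewrite rmorphM rmorphXn rmorphN1 /T /u.
Qed.

Theorem mainTheorem7 (n : nat) (hn : (2 <= n)%N) :
  (n * (n + 2))%:Z * f n = (16 * (n - 1) ^ 2)%:Z * f (n - 2).
Proof.
case: n hn => [|[|m]] // _.
apply: (@intr_inj rat).
rewrite !rmorphM /= !f_rat subSS subn0.
rewrite -!pmulrn (_ : (m.+2 - 2 = m)%N); last by lia.
have ha : (m.+2 * (m.+2 + 2))%:R = (m.+2)%:R * ((m.+2)%:R + 2) :> rat by rewrite natrM natrD.
have hb : (16 * m.+1 ^ 2)%:R = 16 * ((m.+2)%:R - 1) ^+ 2 :> rat.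
  by rewrite natrM natrX -(addn1 m.+1) natrD addrK.
rewrite ha hb.
exact: (key m).
Qed.
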